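(* Let $x_0>0$, $y_0>0$, and let $T>0$, $c_0>0$ satisfy \[ |x_0|+|x_0-y_0^2|T\le c_0,\quad |y_0|+|y_0-x_0^2|T\le c_0,\quad |x_0|+c_0T+c_0^2T\le c_0,\quad |y_0|+c_0T+c_0^2T\le c_0. \] Then there exists $(x,y)\in C^1([0,T];\mathbb{R}^2)$ solving \[ \dot x(t)=x(t)-\max_{s\in[0,t]}y^2(s),\qquad \dot y(t)=y(t)-\max_{s\in[0,t]}x^2(s),\quad t\in[0,T],\qquad x(0)=x_0,\ y(0)=y_0. \] *)

(* Defs.v *)
From Stdlib Require Import Reals.
Open Scope R_scope.

Definition has_deriv_on (f f' : R -> R) (a b : R) : Prop :=
  forall t, a <= t <= b ->
    forall eps, 0 < eps -> exists delta, 0 < delta /\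
      forall h, h <> 0 -> a <= t + h <= b -> Rabs h < delta ->
        Rabs ((f (t + h) - f t) / h - f' t) < eps.

Definition continuous_on (g : R -> R) (a b : R) : Prop :=
  forall t, a <= t <= b ->
    forall eps, 0 < eps -> exists delta, 0 < delta /\
      forall s, a <= s <= b -> Rabs (s - t) < delta -> Rabs (g s - g t) < eps.

Definition C1_on_with (f f' : R -> R) (a b : R) : Prop :=
  has_deriv_on f f' a b /\ continuous_on f' a b.

Definition is_max_on (g : R -> R) (a b m : R) : Prop :=
  (exists s, a <= s <= b /\ g s = m) /\ (forall s, a <= s <= b -> g s <= m).

(* Main.v *)
From Stdlib Require Import Reals Lra Psatz.
From Coquelicot Require Import Coquelicot.
Require Import Defs.
Open Scope R_scope.

Definition cl (T t : R) := Rmin T (Rmax 0 t).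

Lemma cl_in T t : 0 <= T -> 0 <= cl T t <= T.
Proof. intros; unfold cl, Rmin, Rmax; repeat destruct Rle_dec; lra. Qed.
Lemma cl_id T t : 0 <= t <= T -> cl T t = t.
Proof. intros; unfold cl, Rmin, Rmax; repeat destruct Rle_dec; lra. Qed.
Lemma cl_lip T t s : 0 <= T -> Rabs (cl T s - cl T t) <= Rabs (s - t).
Proof. intros; unfold cl, Rmin, Rmax; repeat destruct Rle_dec;
  unfold Rabs; repeat destruct Rcase_abs; lra. Qed.

Definition gc (f : R -> R) := forall t, continuity_pt f t.
Definition rc (T : R) (g : R -> R) := continuous_on g 0 T.

Lemma cpt_intro f t : (forall eps, 0 < eps -> exists d, 0 < d /\
   forall s, Rabs (s - t) < d -> Rabs (f s - f t) < eps) -> continuity_pt f t.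
Proof.
  intros H eps He. destruct (H eps He) as [d [Hd Hs]]. exists d; split; auto.
  intros s [_ Hs2]. apply Hs. exact Hs2.
Qed.

Lemma cpt_elim f t : continuity_pt f t -> forall eps, 0 < eps -> exists d, 0 < d /\
   forall s, Rabs (s - t) < d -> Rabs (f s - f t) < eps.
Proof.
  intros H eps He. destruct (H eps He) as [d [Hd Hs]]. exists d; split; auto.
  intros s Hst. destruct (Req_dec s t) as [->|Hne].
  - replace (f t - f t) with 0 by ring; rewrite Rabs_R0; lra.
  - apply Hs. split; [split; [exact I|auto]|exact Hst].
Qed.

Lemma gc_rc T f : gc f -> rc T f.
Proof.
  intros H t _ eps He. destruct (cpt_elim _ _ (H t) eps He) as [d [Hd Hs]].
  exists d; split; auto.
Qed.

Lemma rc_gc T g : 0 <= T -> rc T g -> gc (fun s => g (cl T s)).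
Proof.
  intros HT H t. apply cpt_intro. intros eps He.
  destruct (H (cl T t) (cl_in T t HT) eps He) as [d [Hd Hs]].
  exists d; split; auto. intros s Hst.
  apply Hs. apply cl_in; auto. pose proof (cl_lip T t s HT); lra.
Qed.

Lemma rc_ext T f g : rc T f -> (forall t, 0 <= t <= T -> f t = g t) -> rc T g.
Proof.
  intros H E t Ht eps He. destruct (H t Ht eps He) as [d [Hd Hs]].
  exists d; split; auto. intros s Hs1 Hs2. rewrite <- !E by auto. auto.
Qed.

Lemma rc_sq T v : 0 <= T -> rc T v -> rc T (fun r => v r ^ 2).
Proof.
  intros HT H. apply rc_ext with (f := fun r => v (cl T r) * v (cl T r)).
  - apply gc_rc. intro t. apply continuity_pt_mult; apply rc_gc; auto.
  - intros t Ht. rewrite cl_id by auto. ring.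
Qed.

Definition Mx (g : R -> R) (t : R) : R :=
  real (Lub_Rbar (fun v => exists s, 0 <= s <= t /\ v = g s)).

Lemma Mx_max T g t : 0 <= t <= T -> rc T g -> is_max_on g 0 t (Mx g t).
Proof.
  intros Ht Hg.
  assert (HT : 0 <= T) by lra.
  destruct (continuity_ab_maj (fun s => g (cl T s)) 0 t (proj1 Ht)) as [m [Hm1 Hm2]].
  { intros c _. apply (rc_gc T g HT Hg). }
  assert (Hm : forall c, 0 <= c <= t -> g c <= g m).
  { intros c Hc. specialize (Hm1 c Hc). rewrite !cl_id in Hm1 by lra. exact Hm1. }
  assert (E : Mx g t = g m).
  { unfold Mx. rewrite (is_lub_Rbar_unique _ (Finite (g m))). reflexivity.
    split.
    - intros x [s [Hs ->]]. simpl. apply Hm; auto.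
    - intros b Hb. apply Hb. exists m; split; auto. }
  rewrite E. split.
  - exists m; split; auto.
  - intros s Hs; apply Hm; auto.
Qed.

Lemma Mx_lip T g h t B : 0 <= t <= T -> rc T g -> rc T h ->
  (forall s, 0 <= s <= t -> Rabs (g s - h s) <= B) -> Rabs (Mx g t - Mx h t) <= B.
Proof.
  intros Ht Hg Hh HB.
  destruct (Mx_max T g t Ht Hg) as [[sg [Hsg Eg]] Ug].
  destruct (Mx_max T h t Ht Hh) as [[sh [Hsh Eh]] Uh].
  specialize (Ug sh Hsh). specialize (Uh sg Hsg).
  pose proof (HB sg Hsg) as B1. pose proof (HB sh Hsh) as B2.
  apply Rabs_le. apply Rabs_le_between in B1. apply Rabs_le_between in B2. lra.
Qed.

Lemma Mx_mono T g a b : 0 <= a <= b -> b <= T -> rc T g -> Mx g a <= Mx g b.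
Proof.
  intros Hab HbT Hg.
  destruct (Mx_max T g a ltac:(lra) Hg) as [[sa [Hsa Ea]] _].
  destruct (Mx_max T g b ltac:(lra) Hg) as [_ Ub].
  rewrite <- Ea. apply Ub. lra.
Qed.

Lemma Mx_rc T g : rc T g -> rc T (Mx g).
Proof.
  intros Hg t Ht eps He.
  destruct (Hg t Ht (eps/2) ltac:(lra)) as [d [Hd Hs]].
  exists d; split; auto. intros s Hs1 Hs2.
  assert (key : forall a b, 0 <= a <= b -> b <= T -> (a = t \/ b = t) ->
     Rabs (a - t) < d -> Rabs (b - t) < d -> 0 <= Mx g b - Mx g a < eps).
  { intros a b Hab HbT Hor Ha Hb.
    pose proof (Mx_mono T g a b Hab HbT Hg).
    destruct (Mx_max T g b ltac:(lra) Hg) as [[sb [Hsb Eb]] _].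
    destruct (Mx_max T g a ltac:(lra) Hg) as [_ Ua].
    split; [lra|].
    destruct (Rle_dec sb a) as [Hle|Hlt].
    - specialize (Ua sb ltac:(lra)). lra.
    - assert (Rabs (sb - t) < d).
      { apply Rabs_def2 in Ha. apply Rabs_def2 in Hb. apply Rabs_def1; lra. }
      pose proof (Hs sb ltac:(lra) H0) as H1.
      pose proof (Hs a ltac:(lra) Ha) as H2.
      apply Rabs_def2 in H1. apply Rabs_def2 in H2.
      assert (g a <= Mx g a) by (apply Ua; lra). lra. }
  assert (Rabs (t - t) < d) by (replace (t - t) with 0 by ring; rewrite Rabs_R0; lra).
  destruct (Rle_dec s t).
  - pose proof (key s t ltac:(lra) ltac:(lra) (or_intror eq_refl) Hs2 H).
    apply Rabs_def1; lra.
  - pose proof (key t s ltac:(lra) ltac:(lra) (or_introl eq_refl) H Hs2).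
    apply Rabs_def1; lra.
Qed.

Definition F (T : R) (u v : R -> R) (s : R) : R :=
  u (cl T s) - Mx (fun r => v r ^ 2) (cl T s).
Definition step (a T : R) (u v : R -> R) (t : R) : R := a + RInt (F T u v) 0 t.

Lemma exp_mono x y : x <= y -> exp x <= exp y.
Proof. intros H. destruct (Req_dec x y) as [->|H']; [lra|]. left; apply exp_increasing; lra. Qed.

Lemma F_gc T u v : 0 <= T -> rc T u -> rc T v -> gc (F T u v).
Proof.
  intros HT Hu Hv t. unfold F. apply continuity_pt_minus.
  - apply (rc_gc T u HT Hu).
  - apply (rc_gc T (Mx (fun r => v r ^ 2)) HT). apply Mx_rc, rc_sq; auto.
Qed.

Lemma gc_cont f t : gc f -> continuous f t.
Proof. intros H. apply continuity_pt_filterlim. apply H. Qed.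

Lemma gc_exRInt f a b : gc f -> ex_RInt f a b.
Proof. intros H. apply (ex_RInt_continuous (V:=R_CompleteNormedModule)). intros z _. apply gc_cont, H. Qed.

Lemma RInt_deriv f t : gc f -> is_derive (fun t => RInt f 0 t) t (f t).
Proof.
  intros H. apply (is_derive_RInt f (fun t => RInt f 0 t) 0 t).
  - apply filter_forall. intros b. apply (RInt_correct (V:=R_CompleteNormedModule)), gc_exRInt, H.
  - apply gc_cont, H.
Qed.

Lemma step_deriv a T u v t : 0 <= T -> rc T u -> rc T v ->
  is_derive (step a T u v) t (F T u v t).
Proof.
  intros HT Hu Hv. unfold step.
  pose proof (is_derive_plus (fun _ => a) (fun t => RInt (F T u v) 0 t) t zero (F T u v t)
     (is_derive_const a t) (RInt_deriv _ t (F_gc T u v HT Hu Hv))) as H.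
  replace (F T u v t) with (plus zero (F T u v t)).
  - exact H.
  - unfold plus, zero; simpl; ring.
Qed.

Lemma step_gc a T u v : 0 <= T -> rc T u -> rc T v -> gc (step a T u v).
Proof.
  intros HT Hu Hv t. apply continuity_pt_filterlim.
  apply (ex_derive_continuous (V:=R_NormedModule)). eexists. apply step_deriv; auto.
Qed.

Lemma step_bound a T u v c : 0 <= T -> 0 <= c -> rc T u -> rc T v ->
  (forall t, 0 <= t <= T -> Rabs (u t) <= c /\ Rabs (v t) <= c) ->
  Rabs a + c * T + c ^ 2 * T <= c ->
  forall t, 0 <= t <= T -> Rabs (step a T u v t) <= c.
Proof.
  intros HT Hc Hu Hv Hb Ha t Ht. unfold step.
  assert (HI : Rabs (RInt (F T u v) 0 t) <= (t - 0) * (c + c ^ 2)).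
  { apply abs_RInt_le_const; [lra| apply gc_exRInt, F_gc; auto |].
    intros s Hs. unfold F. rewrite cl_id by lra.
    destruct (Mx_max T (fun r => v r ^ 2) s ltac:(lra) (rc_sq T v HT Hv)) as [[m [Hm Em]] _].
    rewrite <- Em. destruct (Hb s ltac:(lra)) as [H1 _].
    destruct (Hb m ltac:(lra)) as [_ H2].
    apply Rabs_le_between in H1. apply Rabs_le_between in H2.
    apply Rabs_le. nra. }
  pose proof (Rabs_triang a (RInt (F T u v) 0 t)). nra.
Qed.

Lemma step_diff a T c u1 v1 u2 v2 B : 0 <= T -> 0 <= c -> 0 <= B ->
  rc T u1 -> rc T v1 -> rc T u2 -> rc T v2 ->
  (forall t, 0 <= t <= T -> Rabs (v1 t) <= c /\ Rabs (v2 t) <= c) ->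
  (forall t, 0 <= t <= T -> Rabs (u1 t - u2 t) <= B * exp (2 * (1 + 2 * c) * t) /\
                            Rabs (v1 t - v2 t) <= B * exp (2 * (1 + 2 * c) * t)) ->
  forall t, 0 <= t <= T ->
   Rabs (step a T u1 v1 t - step a T u2 v2 t) <= B / 2 * exp (2 * (1 + 2 * c) * t).
Proof.
  intros HT Hc HB Hu1 Hv1 Hu2 Hv2 Hbd Hd t Ht.
  set (L := 1 + 2 * c).
  assert (HL : 0 < L) by (unfold L; lra).
  unfold step.
  replace (a + RInt (F T u1 v1) 0 t - (a + RInt (F T u2 v2) 0 t))
    with (minus (RInt (F T u1 v1) 0 t) (RInt (F T u2 v2) 0 t))
    by (unfold minus, plus, opp; simpl; ring).
  assert (Hg : is_RInt (fun s => L * B * exp (2 * L * s)) 0 t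
                 (minus (B / 2 * exp (2 * L * t)) (B / 2 * exp (2 * L * 0)))).
  { apply (is_RInt_derive (fun s => B / 2 * exp (2 * L * s))).
    - intros x _. auto_derive; [exact I|]. field.
    - intros x _. apply continuity_pt_filterlim.
      apply continuity_pt_mult; [apply continuity_pt_const; intros ? ?; reflexivity|].
      apply (continuity_pt_comp (fun s => 2 * L * s) exp).
      + apply continuity_pt_mult; [apply continuity_pt_const; intros ? ?; reflexivity|].
        apply continuity_pt_id.
      + apply derivable_continuous_pt, derivable_pt_exp. }
  pose proof (norm_RInt_le (fun s => minus (F T u1 v1 s) (F T u2 v2 s))
     (fun s => L * B * exp (2 * L * s)) 0 t
     (minus (RInt (F T u1 v1) 0 t) (RInt (F T u2 v2) 0 t))
     (minus (B / 2 * exp (2 * L * t)) (B / 2 * exp (2 * L * 0))) (proj1 Ht)) as H.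
  refine (Rle_trans _ _ _ (H _ (is_RInt_minus _ _ _ _ _ _
            (RInt_correct _ _ _ (gc_exRInt _ _ _ (F_gc T u1 v1 HT Hu1 Hv1)))
            (RInt_correct _ _ _ (gc_exRInt _ _ _ (F_gc T u2 v2 HT Hu2 Hv2)))) Hg) _).
  - intros s Hs. unfold F. change (norm (minus ?a ?b)) with (Rabs (a - b)).
    rewrite cl_id by lra.
    assert (HM : Rabs (Mx (fun r => v1 r ^ 2) s - Mx (fun r => v2 r ^ 2) s)
                   <= 2 * c * (B * exp (2 * L * s))).
    { apply (Mx_lip T); try lra; try apply rc_sq; auto.
      intros r Hr. destruct (Hd r ltac:(lra)) as [_ H2].
      destruct (Hbd r ltac:(lra)) as [H3 H4].
      replace (v1 r ^ 2 - v2 r ^ 2) with ((v1 r - v2 r) * (v1 r + v2 r)) by ring.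
      rewrite Rabs_mult.
      pose proof (Rabs_triang (v1 r) (v2 r)).
      pose proof (exp_mono (2 * L * r) (2 * L * s) ltac:(nra)).
      pose proof (Rabs_pos (v1 r - v2 r)) as P1. pose proof (Rabs_pos (v1 r + v2 r)) as P2.
      fold L in H2.
      assert (E1 : Rabs (v1 r - v2 r) <= B * exp (2 * L * s)).
      { eapply Rle_trans; [exact H2|]. apply Rmult_le_compat_l; auto. }
      assert (E2 : Rabs (v1 r + v2 r) <= 2 * c) by lra.
      pose proof (Rmult_le_compat _ _ _ _ P1 P2 E1 E2). lra. }
    destruct (Hd s ltac:(lra)) as [H1 _]. fold L in H1.
    pose proof (Rabs_triang (u1 s - u2 s) (- (Mx (fun r => v1 r ^ 2) s - Mx (fun r => v2 r ^ 2) s))).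
    rewrite Rabs_Ropp in H0.
    replace (u1 s - Mx (fun r => v1 r ^ 2) s - (u2 s - Mx (fun r => v2 r ^ 2) s))
      with (u1 s - u2 s + - (Mx (fun r => v1 r ^ 2) s - Mx (fun r => v2 r ^ 2) s)) by ring.
    replace (L * B * exp (2 * L * s)) with (B * exp (2 * L * s) + 2 * c * (B * exp (2 * L * s))) by (unfold L; ring).
    lra.
  - unfold minus, plus, opp; simpl. rewrite Rmult_0_r, exp_0. fold L.
    lra.
Qed.

Fixpoint pic (x0 y0 T : R) (n : nat) : (R -> R) * (R -> R) :=
  match n with
  | O => (fun _ => x0, fun _ => y0)
  | S n => let p := pic x0 y0 T n in
           (step x0 T (fst p) (snd p), step y0 T (snd p) (fst p))
  end.

Lemma pic_inv x0 y0 T c : 0 <= T -> 0 <= c ->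
  Rabs x0 + c * T + c ^ 2 * T <= c -> Rabs y0 + c * T + c ^ 2 * T <= c ->
  forall n, gc (fst (pic x0 y0 T n)) /\ gc (snd (pic x0 y0 T n)) /\
    forall t, 0 <= t <= T -> Rabs (fst (pic x0 y0 T n) t) <= c /\ Rabs (snd (pic x0 y0 T n) t) <= c.
Proof.
  intros HT Hc Hx Hy n. induction n as [|n [G1 [G2 Hb]]].
  - simpl. split; [intro t; apply continuity_pt_const; intros ? ?; reflexivity|].
    split; [intro t; apply continuity_pt_const; intros ? ?; reflexivity|].
    intros t Ht. assert (0 <= c * T) by nra. assert (0 <= c ^ 2 * T) by nra. lra.
  - simpl. split; [|split].
    + apply step_gc; auto; apply gc_rc; auto.
    + apply step_gc; auto; apply gc_rc; auto.
    + intros t Ht. split.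
      * apply step_bound with (c := c); auto; apply gc_rc; auto.
      * apply step_bound with (c := c); auto; try (apply gc_rc; auto).
        intros s Hs; destruct (Hb s Hs); auto.
Qed.

Lemma exp_ge1 x : 0 <= x -> 1 <= exp x.
Proof. intros H. rewrite <- exp_0. apply exp_mono. auto. Qed.

Lemma pic_diff x0 y0 T c : 0 <= T -> 0 <= c ->
  Rabs x0 + c * T + c ^ 2 * T <= c -> Rabs y0 + c * T + c ^ 2 * T <= c ->
  forall n t, 0 <= t <= T ->
    Rabs (fst (pic x0 y0 T (S n)) t - fst (pic x0 y0 T n) t) <= 2 * c * (/2) ^ n * exp (2 * (1 + 2 * c) * t) /\
    Rabs (snd (pic x0 y0 T (S n)) t - snd (pic x0 y0 T n) t) <= 2 * c * (/2) ^ n * exp (2 * (1 + 2 * c) * t).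
Proof.
  intros HT Hc Hx Hy n. pose proof (pic_inv x0 y0 T c HT Hc Hx Hy) as Inv.
  induction n as [|n IH].
  - intros t Ht. destruct (Inv 1%nat) as [_ [_ B1]]. destruct (B1 t Ht) as [B2 B3].
    simpl in B2, B3 |- *. pose proof (exp_ge1 (2 * (1 + 2 * c) * t) ltac:(nra)).
    assert (Rabs x0 <= c) by (assert (0 <= c * T) by nra; assert (0 <= c ^ 2 * T) by nra; lra).
    assert (Rabs y0 <= c) by (assert (0 <= c * T) by nra; assert (0 <= c ^ 2 * T) by nra; lra).
    pose proof (Rabs_triang (step x0 T (fun _ => x0) (fun _ => y0) t) (- x0)).
    pose proof (Rabs_triang (step y0 T (fun _ => y0) (fun _ => x0) t) (- y0)).
    rewrite Rabs_Ropp in *. unfold Rminus. assert (2 * c <= 2 * c * 1 * exp (2 * (1 + 2 * c) * t)) by nra. split; lra.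
  - intros t Ht.
    destruct (Inv n) as [Gn1 [Gn2 Bn]]. destruct (Inv (S n)) as [Gs1 [Gs2 Bs]].
    assert (HB : 0 <= 2 * c * (/2) ^ n) by (apply Rmult_le_pos; [lra| apply pow_le; lra]).
    replace (2 * c * (/ 2) ^ S n) with (2 * c * (/2) ^ n / 2) by (simpl; field).
    change (pic x0 y0 T (S (S n))) with
      (step x0 T (fst (pic x0 y0 T (S n))) (snd (pic x0 y0 T (S n))),
       step y0 T (snd (pic x0 y0 T (S n))) (fst (pic x0 y0 T (S n)))).
    remember (S n) as m. simpl fst. simpl snd. subst m.
    change (pic x0 y0 T (S n)) with
      (step x0 T (fst (pic x0 y0 T n)) (snd (pic x0 y0 T n)),
       step y0 T (snd (pic x0 y0 T n)) (fst (pic x0 y0 T n))) at 3 6.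
    simpl fst. simpl snd. split.
    + apply step_diff; auto; try (apply gc_rc; auto).
      * intros s Hs. destruct (Bs s Hs), (Bn s Hs). auto.
    + apply step_diff; auto; try (apply gc_rc; auto).
      * intros s Hs. destruct (Bs s Hs), (Bn s Hs). auto.
      * intros s Hs. destruct (IH s Hs). auto.
Qed.

Lemma small_pow C eps : 0 < eps -> exists n, C * (/2) ^ n < eps.
Proof.
  intros He.
  assert (Hy : 0 < eps / (Rabs C + 1)).
  { apply Rdiv_lt_0_compat; [lra| pose proof (Rabs_pos C); lra]. }
  destruct (pow_lt_1_zero (/2) ltac:(rewrite Rabs_pos_eq; lra) _ Hy) as [N HN].
  exists N. specialize (HN N (le_n N)).
  rewrite Rabs_pos_eq in HN by (apply pow_le; lra).
  pose proof (pow_le (/2) N ltac:(lra)).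
  assert (C * (/2)^N <= Rabs C * (/2)^N).
  { apply Rmult_le_compat_r; auto. apply Rle_abs. }
  assert (Rabs C * (/2)^N <= Rabs C * (eps / (Rabs C + 1))).
  { apply Rmult_le_compat_l; [apply Rabs_pos| lra]. }
  assert (Rabs C * (eps / (Rabs C + 1)) < eps).
  { pose proof (Rabs_pos C).
    replace (Rabs C * (eps / (Rabs C + 1))) with (eps * (Rabs C / (Rabs C + 1))) by (field; lra).
    assert (Rabs C / (Rabs C + 1) < 1).
    { apply (Rmult_lt_reg_r (Rabs C + 1)); [lra|]. unfold Rdiv. rewrite Rmult_assoc, Rinv_l by lra. lra. }
    nra. }
  lra.
Qed.

Lemma le_from_pow a b C : (forall n, a <= b + C * (/2) ^ n) -> a <= b.
Proof.
  intros H. destruct (Rle_lt_dec a b) as [|Hlt]; auto.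
  destruct (small_pow C (a - b) ltac:(lra)) as [n Hn]. specialize (H n). lra.
Qed.

Lemma zero_from_pow a C : (forall n, Rabs a <= C * (/2) ^ n) -> a = 0.
Proof.
  intros H. assert (Rabs a <= 0).
  { apply le_from_pow with C. intros n. specialize (H n). lra. }
  pose proof (Rabs_pos a). apply Rabs_eq_0. lra.
Qed.

Lemma seq_cauchy (u : nat -> R) A : (forall n, Rabs (u (S n) - u n) <= A * (/2) ^ n) ->
  forall n k, Rabs (u (n + k)%nat - u n) <= 2 * A * (/2) ^ n * (1 - (/2) ^ k).
Proof.
  intros H n k. induction k as [|k IH].
  - rewrite Nat.add_0_r. replace (u n - u n) with 0 by ring. rewrite Rabs_R0. simpl. lra.
  - rewrite Nat.add_succ_r.
    pose proof (Rabs_triang (u (S (n + k)) - u (n + k)%nat) (u (n + k)%nat - u n)).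
    replace (u (S (n + k)) - u (n + k)%nat + (u (n + k)%nat - u n)) with (u (S (n + k)) - u n) in H0 by ring.
    specialize (H (n + k)%nat). rewrite pow_add in H.
    replace (2 * A * (/ 2) ^ n * (1 - (/ 2) ^ S k)) with
      (A * ((/ 2) ^ n * (/ 2) ^ k) + 2 * A * (/ 2) ^ n * (1 - (/ 2) ^ k)) by (simpl; field).
    lra.
Qed.

Lemma seq_lim (u : nat -> R) A : (forall n, Rabs (u (S n) - u n) <= A * (/2) ^ n) ->
  forall n, Rabs (real (Lim_seq u) - u n) <= 2 * A * (/2) ^ n.
Proof.
  intros H.
  assert (HA : 0 <= A).
  { specialize (H O). simpl in H. pose proof (Rabs_pos (u 1%nat - u 0%nat)). lra. }
  assert (Hc : forall n k, Rabs (u (n + k)%nat - u n) <= 2 * A * (/2) ^ n).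
  { intros n k. eapply Rle_trans; [apply seq_cauchy; auto|].
    pose proof (pow_le (/2) n ltac:(lra)). pose proof (pow_le (/2) k ltac:(lra)).
    assert (0 <= 2 * A * (/2) ^ n) by nra. nra. }
  assert (Hex : ex_finite_lim_seq u).
  { apply ex_lim_seq_cauchy_corr. intros eps.
    destruct (small_pow (4 * A) eps (cond_pos eps)) as [N HN].
    exists N. intros n m Hn Hm.
    destruct (Nat.le_exists_sub N n Hn) as [p [-> _]].
    destruct (Nat.le_exists_sub N m Hm) as [q [-> _]].
    pose proof (Hc N p). pose proof (Hc N q).
    pose proof (Rabs_triang (u (N + p)%nat - u N) (u N - u (N + q)%nat)).
    replace (u (N + p)%nat - u N + (u N - u (N + q)%nat)) with (u (N + p)%nat - u (N + q)%nat) in H2 by ring.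
    rewrite (Rabs_minus_sym (u N)) in H2. rewrite (Nat.add_comm p N), (Nat.add_comm q N). lra. }
  pose proof (Lim_seq_correct' u Hex) as Hl.
  apply is_lim_seq_Reals in Hl.
  intros n. set (l := real (Lim_seq u)) in *.
  destruct (Rle_lt_dec (Rabs (l - u n)) (2 * A * (/2) ^ n)) as [|Hlt]; auto.
  exfalso. destruct (Hl (Rabs (l - u n) - 2 * A * (/2) ^ n) ltac:(lra)) as [N HN].
  specialize (HN (n + N)%nat ltac:(lia)). unfold R_dist in HN.
  specialize (Hc n N).
  pose proof (Rabs_triang (l - u (n + N)%nat) (u (n + N)%nat - u n)).
  replace (l - u (n + N)%nat + (u (n + N)%nat - u n)) with (l - u n) in H0 by ring.
  rewrite Rabs_minus_sym in HN. lra.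
Qed.

Lemma pic_swap x0 y0 T n :
  pic y0 x0 T n = (snd (pic x0 y0 T n), fst (pic x0 y0 T n)).
Proof. induction n as [|n IH]; simpl; [reflexivity|]. rewrite IH. reflexivity. Qed.

Lemma compA x0 y0 T c : 0 <= T -> 0 <= c ->
  Rabs x0 + c * T + c ^ 2 * T <= c -> Rabs y0 + c * T + c ^ 2 * T <= c ->
  let X := fun t => real (Lim_seq (fun n => fst (pic x0 y0 T n) t)) in
  let A := 2 * c * exp (2 * (1 + 2 * c) * T) in
  (forall t, 0 <= t <= T -> forall n, Rabs (X t - fst (pic x0 y0 T n) t) <= 2 * A * (/2) ^ n) /\
  rc T X /\ (forall t, 0 <= t <= T -> Rabs (X t) <= c).
Proof.
  intros HT Hc Hx Hy X A.
  pose proof (pic_inv x0 y0 T c HT Hc Hx Hy) as Inv.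
  assert (Hap : forall t, 0 <= t <= T -> forall n, Rabs (X t - fst (pic x0 y0 T n) t) <= 2 * A * (/2) ^ n).
  { intros t Ht. apply seq_lim. intros n.
    destruct (pic_diff x0 y0 T c HT Hc Hx Hy n t Ht) as [D _].
    eapply Rle_trans; [exact D|]. unfold A.
    pose proof (exp_mono (2 * (1 + 2 * c) * t) (2 * (1 + 2 * c) * T) ltac:(nra)).
    pose proof (pow_le (/2) n ltac:(lra)).
    assert (0 <= 2 * c * (/2) ^ n) by nra.
    replace (2 * c * exp (2 * (1 + 2 * c) * T) * (/ 2) ^ n) with
      (2 * c * (/2) ^ n * exp (2 * (1 + 2 * c) * T)) by ring.
    apply Rmult_le_compat_l; auto. }
  split; [exact Hap|split].
  - intros t Ht eps He.
    destruct (small_pow (2 * A) (eps / 3) ltac:(lra)) as [n Hn].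
    destruct (Inv n) as [G _].
    destruct (cpt_elim _ _ (G t) (eps / 3) ltac:(lra)) as [d [Hd Hs]].
    exists d; split; auto. intros s Hs1 Hs2.
    pose proof (Hap s Hs1 n). pose proof (Hap t Ht n). specialize (Hs s Hs2).
    apply Rabs_le_between in H. apply Rabs_le_between in H0. apply Rabs_def2 in Hs.
    apply Rabs_def1; lra.
  - intros t Ht. apply le_from_pow with (2 * A). intros n.
    destruct (Inv n) as [_ [_ B]]. destruct (B t Ht) as [B1 _].
    pose proof (Hap t Ht n).
    pose proof (Rabs_triang (X t - fst (pic x0 y0 T n) t) (fst (pic x0 y0 T n) t)).
    replace (X t - fst (pic x0 y0 T n) t + fst (pic x0 y0 T n) t) with (X t) in H0 by ring.
    lra.
Qed.

Lemma fixp a T c X Y (p q : nat -> R -> R) A : 0 <= T -> 0 <= c -> 0 <= A ->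
  rc T X -> rc T Y -> (forall n, rc T (p n)) -> (forall n, rc T (q n)) ->
  (forall t, 0 <= t <= T -> Rabs (Y t) <= c) ->
  (forall n t, 0 <= t <= T -> Rabs (q n t) <= c) ->
  (forall t, 0 <= t <= T -> forall n, Rabs (X t - p n t) <= 2 * A * (/2) ^ n) ->
  (forall t, 0 <= t <= T -> forall n, Rabs (Y t - q n t) <= 2 * A * (/2) ^ n) ->
  (forall n t, p (S n) t = step a T (p n) (q n) t) ->
  forall t, 0 <= t <= T -> X t = step a T X Y t.
Proof.
  intros HT Hc HA HX HY Hp Hq HYb Hqb HXa HYa Hrec t Ht.
  set (E := exp (2 * (1 + 2 * c) * T)).
  assert (HE : 1 <= E) by (apply exp_ge1; nra).
  cut (X t - step a T X Y t = 0); [lra|].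
  apply zero_from_pow with (A + A * E). intros n.
  assert (HB : 0 <= 2 * A * (/2) ^ n) by (pose proof (pow_le (/2) n ltac:(lra)); nra).
  pose proof (step_diff a T c X Y (p n) (q n) (2 * A * (/2) ^ n) HT Hc HB HX HY (Hp n) (Hq n)
    (fun s Hs => conj (HYb s Hs) (Hqb n s Hs))) as D.
  assert (Hd : forall s, 0 <= s <= T ->
     Rabs (X s - p n s) <= 2 * A * (/ 2) ^ n * exp (2 * (1 + 2 * c) * s) /\
     Rabs (Y s - q n s) <= 2 * A * (/ 2) ^ n * exp (2 * (1 + 2 * c) * s)).
  { intros s Hs. pose proof (exp_ge1 (2 * (1 + 2 * c) * s) ltac:(nra)).
    pose proof (HXa s Hs n). pose proof (HYa s Hs n). split; nra. }
  specialize (D Hd t Ht). rewrite <- Hrec in D.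
  pose proof (HXa t Ht (S n)).
  pose proof (exp_mono (2 * (1 + 2 * c) * t) (2 * (1 + 2 * c) * T) ltac:(nra)). fold E in H0.
  assert (D2 : 2 * A * (/ 2) ^ n / 2 * exp (2 * (1 + 2 * c) * t) <= A * E * (/2) ^ n).
  { replace (2 * A * (/ 2) ^ n / 2) with (A * (/2) ^ n) by field.
    replace (A * E * (/ 2) ^ n) with (A * (/2) ^ n * E) by ring.
    apply Rmult_le_compat_l; auto. nra. }
  replace (2 * A * (/ 2) ^ S n) with (A * (/2) ^ n) in H by (simpl; field).
  pose proof (Rabs_triang (X t - p (S n) t) (p (S n) t - step a T X Y t)).
  replace (X t - p (S n) t + (p (S n) t - step a T X Y t)) with (X t - step a T X Y t) in H1 by ring.
  rewrite Rabs_minus_sym in D. lra.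
Qed.

Lemma deriv_on a T u v : 0 <= T -> rc T u -> rc T v ->
  C1_on_with (step a T u v) (F T u v) 0 T.
Proof.
  intros HT Hu Hv. split.
  - intros t _ eps He.
    pose proof (step_deriv a T u v t HT Hu Hv) as D.
    apply is_derive_Reals in D. destruct (D eps He) as [d Hd].
    exists d; split; [apply cond_pos|]. intros h Hh _ Hh2. apply Hd; auto.
  - apply gc_rc, F_gc; auto.
Qed.

Lemma step0 a T u v : step a T u v 0 = a.
Proof. unfold step. rewrite RInt_point. unfold zero; simpl. ring. Qed.

Theorem mainTheorem4 (x0 y0 T c0 : R)
  (hx0 : 0 < x0) (hy0 : 0 < y0) (hT : 0 < T) (hc0 : 0 < c0)
  (h1 : Rabs x0 + Rabs (x0 - y0 ^ 2) * T <= c0)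
  (h2 : Rabs y0 + Rabs (y0 - x0 ^ 2) * T <= c0)
  (h3 : Rabs x0 + c0 * T + c0 ^ 2 * T <= c0)
  (h4 : Rabs y0 + c0 * T + c0 ^ 2 * T <= c0) :
  exists x y x' y' : R -> R,
    C1_on_with x x' 0 T /\ C1_on_with y y' 0 T /\
    x 0 = x0 /\ y 0 = y0 /\
    forall t, 0 <= t <= T ->
      (exists m, is_max_on (fun s => y s ^ 2) 0 t m /\ x' t = x t - m) /\
      (exists m, is_max_on (fun s => x s ^ 2) 0 t m /\ y' t = y t - m).
Proof.
  assert (HT : 0 <= T) by lra. assert (Hc : 0 <= c0) by lra.
  pose proof (pic_inv x0 y0 T c0 HT Hc h3 h4) as Inv.
  destruct (compA x0 y0 T c0 HT Hc h3 h4) as [HXa [HXr HXb]].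
  destruct (compA y0 x0 T c0 HT Hc h4 h3) as [HYa [HYr HYb]].
  set (X := fun t => real (Lim_seq (fun n => fst (pic x0 y0 T n) t))) in *.
  set (Y := fun t => real (Lim_seq (fun n => fst (pic y0 x0 T n) t))) in *.
  set (A := 2 * c0 * exp (2 * (1 + 2 * c0) * T)) in *.
  assert (HA : 0 <= A) by (unfold A; pose proof (exp_pos (2 * (1 + 2 * c0) * T)); nra).
  pose proof (pic_inv y0 x0 T c0 HT Hc h4 h3) as Inv2.
  assert (FX : forall t, 0 <= t <= T -> X t = step x0 T X Y t).
  { apply (fixp x0 T c0 X Y (fun n => fst (pic x0 y0 T n)) (fun n => snd (pic x0 y0 T n)) A); auto.
    all: first [ intros n; apply gc_rc; apply (Inv n)
               | intros n t Ht; apply (proj2 (proj2 (Inv n)) t Ht)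
               | intros t Ht n; pose proof (HYa t Ht n) as H; rewrite pic_swap in H; exact H
               | intros n t; reflexivity ]. }
  assert (FY : forall t, 0 <= t <= T -> Y t = step y0 T Y X t).
  { apply (fixp y0 T c0 Y X (fun n => fst (pic y0 x0 T n)) (fun n => snd (pic y0 x0 T n)) A); auto.
    all: first [ intros n; apply gc_rc; apply (Inv2 n)
               | intros n t Ht; apply (proj2 (proj2 (Inv2 n)) t Ht)
               | intros t Ht n; rewrite pic_swap; apply HXa; auto
               | intros n t; reflexivity ]. }
  exists (step x0 T X Y), (step y0 T Y X), (F T X Y), (F T Y X).
  split; [apply deriv_on; auto|].
  split; [apply deriv_on; auto|].
  split; [apply step0|]. split; [apply step0|].
  intros t Ht. split.
  - exists (Mx (fun r => Y r ^ 2) t). split.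
    + destruct (Mx_max T (fun r => Y r ^ 2) t Ht (rc_sq T Y HT HYr)) as [[m [Hm Em]] Um].
      split.
      * exists m. split; auto. rewrite <- FY by lra. exact Em.
      * intros s Hs. rewrite <- FY by lra. apply Um; auto.
    + unfold F. rewrite cl_id by auto. rewrite <- FX by auto. reflexivity.
  - exists (Mx (fun r => X r ^ 2) t). split.
    + destruct (Mx_max T (fun r => X r ^ 2) t Ht (rc_sq T X HT HXr)) as [[m [Hm Em]] Um].
      split.
      * exists m. split; auto. rewrite <- FX by lra. exact Em.
      * intros s Hs. rewrite <- FX by lra. apply Um; auto.
    + unfold F. rewrite cl_id by auto. rewrite <- FY by auto. reflexivity.
Qed.
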